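(* Let $q\in\mathbb{C}$ with $0<|q|<1$ and $l,m,n,u\in\mathbb{N}$. Then \[ \sum_{k=0}^\infty\frac{q^{k^2+uk} (q)_{l+m+n-k}} {(q)_k (q)_{l-k}(q)_{m-k}(q)_{n-k} (q)_{u+k}} =\sum_{k=-\infty}^\infty\frac{(-1)^k q^{(3k^2-k)/2} (q)_{l+m}(q)_{l+n}(q)_{m+n}(q)_{u-1}} {(q)_{l-k}(q)_{m-k}(q)_{n-k}(q)_{u-k}(q)_{l+k}(q)_{m+k}(q)_{n+k}(q)_{u+k-1}}, \] and \[ \sum_{k=0}^\infty\frac{q^{k^2+(u-1)k} (q)_{l+m+n-k}} {(q)_k (q)_{l-k}(q)_{m-k}(q)_{n-k}(q)_{u+k}} =\sum_{k=-\infty}^\infty\frac{(-1)^k q^{(3k^2+k)/2} (q)_{l+m}(q)_{m+n}(q)_{l+n}(q)_{u-1}} {(q)_{l-k}(q)_{m-k}(q)_{n-k}(q)_{u-k}(q)_{l+k}(q)_{m+k}(q)_{n+k}(q)_{u+k-1}}. \]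
   Context: For an integer $n$, $(q)_n=(q;q)_n$ with $(q)_0=1$ and $(q)_n=(1-q)(1-q^2)\cdots(1-q^n)$ for $n\ge1$; for $n<0$ one uses the convention $1/(q)_n=0$. *)

(* Defs.v *)
From Stdlib Require Import Reals ZArith.
From Coquelicot Require Import Coquelicot.
Open Scope C_scope.

Fixpoint qpoch (q : Complex.C) (n : nat) : Complex.C :=
  match n with
  | O => 1
  | S n' => qpoch q n' * (1 - Cpow q (S n'))
  end.

(* 1/(q)_n for an integer n, with the convention 1/(q)_n = 0 for n < 0 *)
Definition qpinv (q : Complex.C) (z : Z) : Complex.C :=
  if (z <? 0)%Z then 0 else / qpoch q (Z.to_nat z).

Definition is_zseries (b : Z -> Complex.C) (s : Complex.C) : Prop :=
  exists s1 s2 : Complex.C,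
    is_series (fun n : nat => b (Z.of_nat n)) s1 /\
    is_series (fun n : nat => b (- Z.of_nat (S n))%Z) s2 /\
    s = s1 + s2.

Definition zsign (k : Z) : Complex.C := Cpow (-1) (Z.abs_nat k).

(* Main.v *)
Require Import Defs.
From Stdlib Require Import Reals ZArith Lia Lra.
From Coquelicot Require Import Coquelicot.
Open Scope C_scope.

Definition E (q : C) (z : Z) : C :=
  match z with
  | Z0 => 1
  | Zpos p => Cpow q (Pos.to_nat p)
  | Zneg p => / Cpow q (Pos.to_nat p)
  end.

Definition good (q : C) : Prop :=
  q <> 0 /\ (forall n : nat, (0 < n)%nat -> 1 - Cpow q n <> 0)
  /\ (forall n : nat, 1 + Cpow q n <> 0).

Lemma good_of (q : C) : (0 < Cmod q)%R -> (Cmod q < 1)%R -> good q.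
Proof.
  intros h0 h1. split; [|split].
  - intro e. rewrite e, Cmod_0 in h0. lra.
  - intros n hn e.
    assert (Cpow q n = 1) as e1.
    { replace (Cpow q n) with (1 - (1 - Cpow q n)) by ring. rewrite e. ring. }
    assert (Cmod (Cpow q n) = 1%R) as e2 by (rewrite e1; apply Cmod_1).
    rewrite Cmod_pow in e2.
    assert ((Cmod q ^ n < 1)%R) by (apply pow_lt_1_compat; [lra|lia]).
    lra.
  - intros n e.
    assert (Cpow q n = -1) as e1.
    { replace (Cpow q n) with ((1 + Cpow q n) - 1) by ring. rewrite e. ring. }
    assert (Cmod (Cpow q n) = 1%R) as e2.
    { rewrite e1, Cmod_R. unfold Rabs. destruct Rcase_abs; lra. }
    rewrite Cmod_pow in e2.
    destruct n.
    + simpl in e1. injection e1 as e3. lra.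
    + assert ((0 <= Cmod q ^ (S n) < 1)%R) by (apply pow_lt_1_compat; [lra|lia]).
      lra.
Qed.

Lemma Cinv_nz (x : C) : x <> 0 -> / x <> 0.
Proof.
  intros h e. assert (H := Cinv_r x h). rewrite e in H.
  replace (x * 0) with (RtoC 0) in H by ring. injection H as H1. lra.
Qed.

Lemma Cmult_nz (x y : C) : x <> 0 -> y <> 0 -> x * y <> 0.
Proof.
  intros hx hy e. apply hy. replace y with (/ x * (x * y)) by (field; auto).
  rewrite e. ring.
Qed.

Lemma E_nonneg (q : C) (z : Z) : (0 <= z)%Z -> E q z = Cpow q (Z.to_nat z).
Proof. intros h. destruct z; simpl; try reflexivity; lia. Qed.

Lemma E_nonpos (q : C) (z : Z) : (z <= 0)%Z -> E q z = / Cpow q (Z.to_nat (- z)).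
Proof. intros h. destruct z; simpl; try lia. - field. - reflexivity. Qed.

Lemma E_nat (q : C) (n : nat) : E q (Z.of_nat n) = Cpow q n.
Proof. rewrite E_nonneg by lia. rewrite Nat2Z.id. reflexivity. Qed.

Lemma E_0 (q : C) : E q 0 = 1.
Proof. reflexivity. Qed.

Lemma E_nz (q : C) (z : Z) : q <> 0 -> E q z <> 0.
Proof.
  intros hq. destruct (Z_le_gt_dec 0 z) as [h|h].
  - rewrite E_nonneg by lia. apply Cpow_nz; auto.
  - rewrite E_nonpos by lia. apply Cinv_nz, Cpow_nz; auto.
Qed.

Lemma E_succ (q : C) (z : Z) : q <> 0 -> E q (z + 1) = E q z * q.
Proof.
  intros hq. destruct (Z_le_gt_dec 0 z) as [h|h].
  - rewrite !E_nonneg by lia. rewrite Z2Nat.inj_add by lia. simpl.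
    rewrite Cpow_add_r. simpl. ring.
  - rewrite !E_nonpos by lia.
    replace (Z.to_nat (- z)) with (S (Z.to_nat (- (z + 1)))) by lia.
    simpl. field. split; [apply Cpow_nz; auto | auto].
Qed.

Lemma E_add (q : C) (a b : Z) : q <> 0 -> E q (a + b) = E q a * E q b.
Proof.
  intros hq. induction b using Z.peano_ind.
  - rewrite Z.add_0_r, E_0. ring.
  - rewrite Z.add_succ_r, <- !Z.add_1_r, !E_succ, IHb by auto. ring.
  - assert (E q (a + Z.pred b) * q = E q a * (E q (Z.pred b) * q)) as h.
    { rewrite <- !E_succ by auto.
      replace (a + Z.pred b + 1)%Z with (a + b)%Z by lia.
      replace (Z.pred b + 1)%Z with b by lia. auto. }
    apply (f_equal (fun x => x / q)) in h.
    replace (E q (a + Z.pred b) * q / q) with (E q (a + Z.pred b)) in h by (field; auto).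
    rewrite h. field. auto.
Qed.

Lemma E_opp (q : C) (a : Z) : q <> 0 -> E q (- a) = / E q a.
Proof.
  intros hq. assert (E q (- a) * E q a = 1) as h.
  { rewrite <- E_add by auto. replace (- a + a)%Z with 0%Z by lia. reflexivity. }
  assert (E q a <> 0) by (apply E_nz; auto).
  replace (E q (- a)) with (E q (- a) * E q a / E q a) by (field; auto).
  rewrite h. field. auto.
Qed.

Lemma E_sub (q : C) (a b : Z) : q <> 0 -> E q (a - b) = E q a / E q b.
Proof. intros hq. unfold Z.sub. rewrite E_add, E_opp by auto. reflexivity. Qed.

Lemma E_1 (q : C) : E q 1 = q.
Proof. simpl. ring. Qed.

Lemma E_mul_nat (q : C) (a : Z) (n : nat) : q <> 0 -> E q (Z.of_nat n * a) = Cpow (E q a) n.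
Proof.
  intros hq. induction n.
  - simpl. reflexivity.
  - rewrite Nat2Z.inj_succ. replace (Z.succ (Z.of_nat n) * a)%Z with (a + Z.of_nat n * a)%Z by lia.
    rewrite E_add, IHn by auto. simpl. reflexivity.
Qed.

Lemma one_minus_E_nz (q : C) (z : Z) : good q -> z <> 0%Z -> 1 - E q z <> 0.
Proof.
  intros [hq [h1 h2]] hz. destruct (Z_le_gt_dec 0 z) as [h|h].
  - rewrite E_nonneg by lia. apply h1. lia.
  - rewrite E_nonpos by lia. intro e. apply (h1 (Z.to_nat (- z))). lia.
    assert (Cpow q (Z.to_nat (- z)) <> 0) by (apply Cpow_nz; auto).
    replace (1 - Cpow q (Z.to_nat (- z))) with (- Cpow q (Z.to_nat (- z)) * (1 - / Cpow q (Z.to_nat (- z)))) by (field; auto).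
    rewrite e. ring.
Qed.

Lemma one_plus_E_nz (q : C) (n : nat) : good q -> 1 + E q (Z.of_nat n) <> 0.
Proof. intros [hq [h1 h2]]. rewrite E_nat. apply h2. Qed.

Definition P (q : C) (z : Z) : C := qpinv q z.

Lemma P_neg (q : C) (z : Z) : (z < 0)%Z -> P q z = 0.
Proof. intros h. unfold P, qpinv. destruct (z <? 0)%Z eqn:e. reflexivity. apply Z.ltb_ge in e. lia. Qed.

Lemma P_nonneg (q : C) (z : Z) : (0 <= z)%Z -> P q z = / qpoch q (Z.to_nat z).
Proof. intros h. unfold P, qpinv. destruct (z <? 0)%Z eqn:e. apply Z.ltb_lt in e. lia. reflexivity. Qed.

Lemma P_nat (q : C) (n : nat) : P q (Z.of_nat n) = / qpoch q n.
Proof. rewrite P_nonneg by lia. rewrite Nat2Z.id. reflexivity. Qed.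

Lemma qpoch_nz (q : C) (n : nat) : good q -> qpoch q n <> 0.
Proof.
  intros g. induction n; simpl.
  - intro e. injection e as e1. lra.
  - apply Cmult_nz; auto. destruct g as [hq [h1 h2]]. apply (h1 (S n)). lia.
Qed.

Lemma Prec (q : C) (z : Z) : good q -> P q (z - 1) = (1 - E q z) * P q z.
Proof.
  intros g. destruct (Z_le_gt_dec z 0) as [h|h].
  - rewrite (P_neg q (z - 1)) by lia.
    destruct (Z.eq_dec z 0) as [e|e].
    + subst. rewrite E_0. ring.
    + rewrite P_neg by lia. ring.
  - rewrite !P_nonneg by lia.
    replace (Z.to_nat z) with (S (Z.to_nat (z - 1))) by lia.
    rewrite E_nonneg by lia. replace (Z.to_nat z) with (S (Z.to_nat (z - 1))) by lia.
    simpl. field. split.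
    + destruct g as [hq [h1 h2]]. apply (h1 (S (Z.to_nat (z - 1)))). lia.
    + apply qpoch_nz; auto.
Qed.

Lemma QZrec (q : C) (z : Z) : (1 <= z)%Z ->
  qpoch q (Z.to_nat z) = qpoch q (Z.to_nat (z - 1)) * (1 - E q z).
Proof.
  intros h. rewrite E_nonneg by lia.
  replace (Z.to_nat z) with (S (Z.to_nat (z - 1))) by lia. reflexivity.
Qed.

Fixpoint sumn (f : nat -> C) (n : nat) : C :=
  match n with
  | O => 0
  | S n' => sumn f n' + f n'
  end.

Lemma sumn_ext (f g : nat -> C) (n : nat) :
  (forall i, (i < n)%nat -> f i = g i) -> sumn f n = sumn g n.
Proof.
  induction n; intros h; simpl; auto.
  rewrite IHn by (intros; apply h; lia). rewrite h by lia. reflexivity.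
Qed.

Lemma sumn_add (f g : nat -> C) (n : nat) :
  sumn (fun i => f i + g i) n = sumn f n + sumn g n.
Proof. induction n; simpl. ring. rewrite IHn. ring. Qed.

Lemma sumn_scal (c : C) (f : nat -> C) (n : nat) :
  sumn (fun i => c * f i) n = c * sumn f n.
Proof. induction n; simpl. ring. rewrite IHn. ring. Qed.

Lemma sumn_swap (f : nat -> nat -> C) (n m : nat) :
  sumn (fun i => sumn (fun j => f i j) m) n = sumn (fun j => sumn (fun i => f i j) n) m.
Proof.
  revert m. induction n; intros m; simpl.
  - induction m; simpl; auto. rewrite <- IHm. ring.
  - rewrite IHn. rewrite <- sumn_add. reflexivity.
Qed.

Lemma sumn_shift (f : nat -> C) (n : nat) :
  sumn f (S n) = f O + sumn (fun i => f (S i)) n.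
Proof. induction n; simpl in *. ring. rewrite IHn. ring. Qed.

Lemma sumn_zero (f : nat -> C) (n : nat) :
  (forall i, (i < n)%nat -> f i = 0) -> sumn f n = 0.
Proof.
  intros h. rewrite (sumn_ext f (fun _ => 0)) by auto.
  clear h. induction n; simpl; auto. rewrite IHn. ring.
Qed.

Lemma sumn_rev (f : nat -> C) (n : nat) :
  sumn f n = sumn (fun i => f (n - 1 - i)%nat) n.
Proof.
  induction n; auto.
  rewrite (sumn_shift (fun i => f (S n - 1 - i)%nat)).
  rewrite (sumn_ext (fun i => f (S n - 1 - S i)%nat) (fun i => f (n - 1 - i)%nat)) by (intros; f_equal; lia).
  rewrite <- IHn. replace (S n - 1 - 0)%nat with n by lia. simpl. ring.
Qed.

Definition zs (B : nat) (f : Z -> C) : C :=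
  sumn (fun i => f (Z.of_nat i - Z.of_nat B)%Z) (2 * B + 1).

Lemma zs_ext (B : nat) (f g : Z -> C) :
  (forall k, (- Z.of_nat B <= k <= Z.of_nat B)%Z -> f k = g k) -> zs B f = zs B g.
Proof. intros h. unfold zs. apply sumn_ext. intros i hi. apply h. lia. Qed.

Lemma zs_add (B : nat) (f g : Z -> C) : zs B (fun k => f k + g k) = zs B f + zs B g.
Proof. unfold zs. apply sumn_add. Qed.

Lemma zs_scal (B : nat) (c : C) (f : Z -> C) : zs B (fun k => c * f k) = c * zs B f.
Proof. unfold zs. apply sumn_scal. Qed.

Lemma zs_swap (B B' : nat) (f : Z -> Z -> C) :
  zs B (fun k => zs B' (fun j => f k j)) = zs B' (fun j => zs B (fun k => f k j)).
Proof. unfold zs. apply sumn_swap. Qed.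

Lemma zs_refl (B : nat) (f : Z -> C) : zs B f = zs B (fun k => f (- k)%Z).
Proof.
  unfold zs. rewrite sumn_rev. apply sumn_ext. intros i hi. f_equal. lia.
Qed.

Lemma zs_S (B : nat) (f : Z -> C) :
  zs (S B) f = f (- Z.of_nat (S B))%Z + zs B f + f (Z.of_nat (S B)).
Proof.
  unfold zs. replace (2 * S B + 1)%nat with (S (S (2 * B + 1))) by lia.
  rewrite sumn_shift. change (sumn (fun i => f (Z.of_nat (S i) - Z.of_nat (S B))%Z) (S (2 * B + 1)))
    with (sumn (fun i => f (Z.of_nat (S i) - Z.of_nat (S B))%Z) (2 * B + 1) + f (Z.of_nat (S (2 * B + 1)) - Z.of_nat (S B))%Z).
  replace (Z.of_nat (S (2 * B + 1)) - Z.of_nat (S B))%Z with (Z.of_nat (S B)) by lia.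
  replace (Z.of_nat 0 - Z.of_nat (S B))%Z with (- Z.of_nat (S B))%Z by lia.
  rewrite (sumn_ext (fun i => f (Z.of_nat (S i) - Z.of_nat (S B))%Z) (fun i => f (Z.of_nat i - Z.of_nat B)%Z))
    by (intros; f_equal; lia).
  ring.
Qed.

Lemma zs_zero (B : nat) (f : Z -> C) :
  (forall k, (- Z.of_nat B <= k <= Z.of_nat B)%Z -> f k = 0) -> zs B f = 0.
Proof. intros h. unfold zs. apply sumn_zero. intros i hi. apply h. lia. Qed.

Lemma zs_extend (B B' : nat) (f : Z -> C) : (B <= B')%nat ->
  (forall k, (Z.of_nat B < Z.abs k)%Z -> f k = 0) -> zs B' f = zs B f.
Proof.
  intros hB h. induction hB; auto.
  rewrite zs_S, IHhB. rewrite !h by lia. ring.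
Qed.

Lemma zs_single (B : nat) (f : Z -> C) (k0 : Z) : (Z.abs k0 <= Z.of_nat B)%Z ->
  (forall k, k <> k0 -> f k = 0) -> zs B f = f k0.
Proof.
  intros hk h. induction B.
  - unfold zs. simpl. assert (k0 = 0%Z) by lia. subst. ring.
  - destruct (Z.eq_dec (Z.abs k0) (Z.of_nat (S B))) as [e|e].
    + rewrite zs_S. rewrite zs_zero by (intros k hk2; apply h; lia).
      destruct (Z.eq_dec k0 (Z.of_nat (S B))) as [e2|e2].
      * rewrite (h (- Z.of_nat (S B))%Z) by lia. rewrite e2. ring.
      * rewrite (h (Z.of_nat (S B))) by lia. replace k0 with (- Z.of_nat (S B))%Z by lia. ring.
    + rewrite zs_S, IHB by lia. rewrite (h (- Z.of_nat (S B))%Z), (h (Z.of_nat (S B))) by lia. ring.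
Qed.

Lemma zs_single_in (B : nat) (f : Z -> C) (k0 : Z) : (Z.abs k0 <= Z.of_nat B)%Z ->
  (forall k, (- Z.of_nat B <= k <= Z.of_nat B)%Z -> k <> k0 -> f k = 0) -> zs B f = f k0.
Proof.
  intros hk h.
  rewrite (zs_ext B f (fun k => if Z.eq_dec k k0 then f k else 0)).
  - rewrite (zs_single B _ k0); auto.
    + destruct (Z.eq_dec k0 k0); tauto.
    + intros k hk2. destruct (Z.eq_dec k k0); tauto.
  - intros k hk2. destruct (Z.eq_dec k k0). reflexivity. apply h; auto.
Qed.

Lemma zs_tele (B : nat) (h : Z -> C) :
  zs B (fun k => h (k + 1)%Z - h k) = h (Z.of_nat B + 1)%Z - h (- Z.of_nat B)%Z.
Proof.
  induction B.
  - unfold zs. simpl. ring.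
  - rewrite zs_S, IHB. replace (- Z.of_nat (S B) + 1)%Z with (- Z.of_nat B)%Z by lia.
    replace (Z.of_nat (S B)) with (Z.of_nat B + 1)%Z by lia. ring.
Qed.

Lemma zs_antisym (B : nat) (f : Z -> C) : (forall k, f (- k)%Z = - f k) -> zs B f = 0.
Proof.
  intros h. assert (zs B f = - zs B f) as e.
  { rewrite zs_refl at 1. rewrite (zs_ext B _ (fun k => -1 * f k)) by (intros; rewrite h; ring).
    rewrite zs_scal. ring. }
  assert (2 * zs B f = 0) as e2 by (replace (2 * zs B f) with (zs B f + zs B f) by ring; rewrite e at 1; ring).
  replace (zs B f) with (/2 * (2 * zs B f)) by (field; intro x; injection x as x1; lra).
  rewrite e2. ring.
Qed.

Lemma zs_sym (B : nat) (f g : Z -> C) :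
  (forall k, f k + f (- k)%Z = g k + g (- k)%Z) -> zs B f = zs B g.
Proof.
  intros h.
  assert (zs B f + zs B f = zs B g + zs B g) as e.
  { rewrite (zs_refl B f) at 2. rewrite (zs_refl B g) at 2.
    rewrite <- !zs_add. apply zs_ext. intros; apply h. }
  replace (zs B f) with (/2 * (zs B f + zs B f)) by (field; intro x; injection x as x1; lra).
  rewrite e. field.
Qed.

Lemma zsign_succ (k : Z) : zsign (k + 1) = - zsign k.
Proof.
  unfold zsign. destruct (Z_le_gt_dec 0 k) as [h|h].
  - replace (Z.abs_nat (k + 1)) with (S (Z.abs_nat k)) by lia. simpl. ring.
  - replace (Z.abs_nat k) with (S (Z.abs_nat (k + 1))) by lia. simpl. ring.
Qed.

Lemma zsign_opp (k : Z) : zsign (- k) = zsign k.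
Proof. unfold zsign. f_equal. lia. Qed.

Lemma zsign_0 : zsign 0 = 1.
Proof. reflexivity. Qed.

Definition alpha (q : C) (k : Z) : C := zsign k * E q (k * (k - 1) / 2).

Lemma tri_succ (k : Z) : ((k + 1) * (k + 1 - 1) / 2 = k * (k - 1) / 2 + k)%Z.
Proof.
  replace ((k + 1) * (k + 1 - 1))%Z with (k * (k - 1) + k * 2)%Z by ring.
  rewrite Z.div_add by lia. reflexivity.
Qed.

Lemma tri_opp (k : Z) : ((- k) * (- k - 1) / 2 = k * (k - 1) / 2 + k)%Z.
Proof.
  replace ((- k) * (- k - 1))%Z with (k * (k - 1) + k * 2)%Z by ring.
  rewrite Z.div_add by lia. reflexivity.
Qed.

Lemma alpha_succ (q : C) (k : Z) : q <> 0 -> alpha q (k + 1) = - E q k * alpha q k.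
Proof. intros hq. unfold alpha. rewrite zsign_succ, tri_succ, E_add by auto. ring. Qed.

Lemma alpha_opp (q : C) (k : Z) : q <> 0 -> alpha q (- k) = E q k * alpha q k.
Proof. intros hq. unfold alpha. rewrite zsign_opp, tri_opp, E_add by auto. ring. Qed.

Lemma alpha_0 (q : C) : alpha q 0 = 1.
Proof. unfold alpha. rewrite zsign_0. simpl. ring. Qed.

Ltac Esimp hq := repeat (rewrite ?E_add, ?E_sub, ?E_opp, ?E_1, ?E_0 by exact hq).
Ltac fld hq := field; repeat split; try (apply E_nz; exact hq); try exact hq.

Definition Ut (q : C) (j k : Z) : C := alpha q k * P q (j - k) * P q (j + k).

Lemma U_step (q : C) (M k : Z) : good q ->
  (1 + E q M) * (E q (2 * M - 1) - 1) * (E q M - 1) * Ut q M k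
  - (E q (M - 1) - 1) * (E q M - 1) * Ut q (M - 1) k
  = (alpha q (k + 1) * P q (M - (k + 1)) * P q (M - 1 + (k + 1))
       * (E q M * (E q M - 1) * E q (- (k + 1)) + E q M * (E q (M - 1) - 1)))
    - (alpha q k * P q (M - k) * P q (M - 1 + k)
       * (E q M * (E q M - 1) * E q (- k) + E q M * (E q (M - 1) - 1))).
Proof.
  intros g. assert (hq : q <> 0) by apply g. unfold Ut.
  replace (M - 1 - k)%Z with ((M - k) - 1)%Z by ring.
  replace (M - (k + 1))%Z with ((M - k) - 1)%Z by ring.
  replace (M - 1 + (k + 1))%Z with (M + k)%Z by ring.
  replace (M - 1 + k)%Z with ((M + k) - 1)%Z by ring.
  rewrite !(Prec q _ g). rewrite alpha_succ by auto.
  replace (2 * M - 1)%Z with (M + M - 1)%Z by ring.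
  Esimp hq. fld hq.
Qed.

Lemma cancel_nz (a x : C) : a <> 0 -> a * x = 0 -> x = 0.
Proof. intros h e. replace x with (/ a * (a * x)) by (field; auto). rewrite e. ring. Qed.

Definition UH (q : C) (M k : Z) : C :=
  alpha q k * P q (M - k) * P q (M - 1 + k)
  * (E q M * (E q M - 1) * E q (- k) + E q M * (E q (M - 1) - 1)).

Lemma P0 (q : C) : P q 0 = 1.
Proof. rewrite P_nonneg by lia. simpl. field. Qed.

Lemma U_val (q : C) (j B : nat) : good q -> (j <= B)%nat ->
  zs B (Ut q (Z.of_nat j)) = match j with O => 1 | S _ => 0 end.
Proof.
  intros g. assert (hq : q <> 0) by apply g. induction j; intros hjB.
  - rewrite (zs_single B _ 0%Z).
    2:{ lia. }
    2:{ intros k hk; unfold Ut.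
      destruct (Z_le_gt_dec 0 k); [rewrite (P_neg q (_ - k)) by lia | rewrite (P_neg q (_ + k)) by lia]; ring. }
    unfold Ut. simpl. rewrite alpha_0, P0. ring.
  - set (M := Z.of_nat (S j)).
    assert (e : zs B (fun k => (1 + E q M) * (E q (2 * M - 1) - 1) * (E q M - 1) * Ut q M k
                 - (E q (M - 1) - 1) * (E q M - 1) * Ut q (M - 1) k) = 0).
    { rewrite (zs_ext B _ (fun k => UH q M (k + 1) - UH q M k)) by (intros; unfold UH; apply U_step; auto).
      rewrite zs_tele. unfold UH. rewrite (P_neg q (M - (Z.of_nat B + 1))) by lia.
      rewrite (P_neg q (M - 1 + - Z.of_nat B)) by lia. ring. }
    replace (zs B _) with ((1 + E q M) * (E q (2 * M - 1) - 1) * (E q M - 1) * zs B (Ut q M)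
                 - (E q (M - 1) - 1) * (E q M - 1) * zs B (Ut q (M - 1))) in e.
    2:{ rewrite (zs_ext B (fun k => (1 + E q M) * (E q (2 * M - 1) - 1) * (E q M - 1) * Ut q M k
                 - (E q (M - 1) - 1) * (E q M - 1) * Ut q (M - 1) k)
            (fun k => (1 + E q M) * (E q (2 * M - 1) - 1) * (E q M - 1) * Ut q M k
                 + (- ((E q (M - 1) - 1) * (E q M - 1))) * Ut q (M - 1) k)) by (intros; ring).
        rewrite zs_add, !zs_scal. ring. }
    replace (M - 1)%Z with (Z.of_nat j) in e by (unfold M; lia).
    rewrite IHj in e by lia.
    assert (c0 : (E q (Z.of_nat j) - 1) * (E q M - 1) * match j with O => 1 | S _ => 0 end = 0).
    { destruct j. simpl. ring. ring. }
    assert (G0 : (1 + E q M) * (E q (2 * M - 1) - 1) * (E q M - 1) <> 0).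
    { apply Cmult_nz; [apply Cmult_nz|].
      - unfold M. apply one_plus_E_nz; auto.
      - intro x. apply (one_minus_E_nz q (2 * M - 1) g). unfold M; lia.
        replace (1 - E q (2 * M - 1)) with (- (E q (2 * M - 1) - 1)) by ring. rewrite x. ring.
      - intro x. apply (one_minus_E_nz q M g). unfold M; lia.
        replace (1 - E q M) with (- (E q M - 1)) by ring. rewrite x. ring. }
    apply (cancel_nz _ _ G0). rewrite c0 in e. rewrite <- e. ring.
Qed.

(* ---------- K0 : q-Vandermonde kernel ---------- *)
Definition F0 (q : C) (u N k j : Z) : C :=
  E q ((u - j) * (N - j)) * P q (u - j) * P q (N - j) * P q (j - k) * P q (j + k).

Definition H0 (q : C) (u M k j : Z) : C :=
  - E q M * E q (- j) * E q ((u - j) * (M - j)) * P q (u - j) * P q (M - j)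
  * P q (j - 1 - k) * P q (j - 1 + k).

Lemma K0_step (q : C) (u M k j : Z) : good q ->
  (1 - E q (M - k)) * (1 - E q (M + k)) * F0 q u M k j
  - (1 - E q (M + u)) * F0 q u (M - 1) k j = H0 q u M k (j + 1) - H0 q u M k j.
Proof.
  intros g. assert (hq : q <> 0) by apply g. unfold F0, H0.
  replace ((u - j) * (M - 1 - j))%Z with ((u - j) * (M - j) - u + j)%Z by ring.
  replace ((u - (j + 1)) * (M - (j + 1)))%Z with ((u - j) * (M - j) - u - M + j + j + 1)%Z by ring.
  replace (M - 1 - j)%Z with ((M - j) - 1)%Z by ring.
  replace (u - (j + 1))%Z with ((u - j) - 1)%Z by ring.
  replace (M - (j + 1))%Z with ((M - j) - 1)%Z by ring.
  replace (j + 1 - 1 - k)%Z with (j - k)%Z by ring.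
  replace (j + 1 - 1 + k)%Z with (j + k)%Z by ring.
  replace (j - 1 - k)%Z with ((j - k) - 1)%Z by ring.
  replace (j - 1 + k)%Z with ((j + k) - 1)%Z by ring.
  rewrite !(Prec q _ g).
  Esimp hq. fld hq.
Qed.

Lemma qpoch_succ (q : C) (n : nat) : qpoch q (S n) = qpoch q n * (1 - E q (Z.of_nat (S n))).
Proof. rewrite E_nat. reflexivity. Qed.

Lemma qpoch_P (q : C) (n : nat) : good q -> qpoch q n * P q (Z.of_nat n) = 1.
Proof. intros g. rewrite P_nat. field. apply qpoch_nz; auto. Qed.

Lemma K0 (q : C) (u N : nat) (k : Z) (B : nat) : good q -> (N + u <= B)%nat ->
  qpoch q (N + u) * P q (Z.of_nat u - k) * P q (Z.of_nat u + k)
  * P q (Z.of_nat N - k) * P q (Z.of_nat N + k)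
  = zs B (F0 q (Z.of_nat u) (Z.of_nat N) k).
Proof.
  intros g. assert (hq : q <> 0) by apply g. revert k. induction N; intros k hB.
  - destruct (Z.eq_dec k 0) as [e|e].
    + subst k. rewrite (zs_single B _ 0%Z).
      2:{ lia. }
      2:{ intros j hj. unfold F0. destruct (Z_le_gt_dec 0 j).
          rewrite (P_neg q (Z.of_nat 0 - j)) by lia. ring. rewrite (P_neg q (j - 0)) by lia. ring. }
      unfold F0. simpl Nat.add.
      replace (Z.of_nat 0 - 0)%Z with 0%Z by lia. replace (Z.of_nat u - 0)%Z with (Z.of_nat u) by lia.
      replace (Z.of_nat u + 0)%Z with (Z.of_nat u) by lia. replace (Z.of_nat 0 + 0)%Z with 0%Z by lia.
      replace (0 - 0)%Z with 0%Z by lia. replace (0 + 0)%Z with 0%Z by lia.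
      replace (Z.of_nat u * 0)%Z with 0%Z by lia.
      rewrite P0, E_0. pose proof (qpoch_P q u g) as h. transitivity (qpoch q u * P q (Z.of_nat u) * P q (Z.of_nat u)). ring. rewrite h. ring.
    + rewrite zs_zero.
      2:{ intros j hj. unfold F0. destruct (Z_le_gt_dec j 0).
          destruct (Z_le_gt_dec 0 k).
          rewrite (P_neg q (j - k)) by lia. ring. rewrite (P_neg q (j + k)) by lia. ring.
          rewrite (P_neg q (Z.of_nat 0 - j)) by lia. ring. }
      destruct (Z_le_gt_dec 0 k).
      rewrite (P_neg q (Z.of_nat 0 - k)) by lia. ring. rewrite (P_neg q (Z.of_nat 0 + k)) by lia. ring.
  - set (M := Z.of_nat (S N)).
    assert (eM : Z.of_nat N = (M - 1)%Z) by (unfold M; lia).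
    assert (tele : (1 - E q (M - k)) * (1 - E q (M + k)) * zs B (F0 q (Z.of_nat u) M k)
                   - (1 - E q (M + Z.of_nat u)) * zs B (F0 q (Z.of_nat u) (M - 1) k) = 0).
    { transitivity (zs B (fun j => H0 q (Z.of_nat u) M k (j + 1) - H0 q (Z.of_nat u) M k j)).
      { rewrite (zs_ext B (fun j => H0 q (Z.of_nat u) M k (j + 1) - H0 q (Z.of_nat u) M k j)
          (fun j => (1 - E q (M - k)) * (1 - E q (M + k)) * F0 q (Z.of_nat u) M k j
             + (- (1 - E q (M + Z.of_nat u))) * F0 q (Z.of_nat u) (M - 1) k j)).
        2:{ intros j hj. rewrite <- (K0_step q (Z.of_nat u) M k j g). ring. }
        rewrite zs_add, !zs_scal. ring. }
      rewrite zs_tele. unfold H0.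
      rewrite (P_neg q (Z.of_nat u - (Z.of_nat B + 1))) by lia.
      destruct (Z_le_gt_dec 0 k).
      rewrite (P_neg q (- Z.of_nat B - 1 - k)) by lia. ring.
      rewrite (P_neg q (- Z.of_nat B - 1 + k)) by lia. ring. }
    rewrite <- eM, <- IHN in tele by lia.
    destruct (Z.eq_dec (Z.abs k) M) as [ek|ek].
    + rewrite (zs_single B _ M).
      2:{ unfold M; lia. }
      2:{ intros j hj. unfold F0. destruct (Z_le_gt_dec j M).
          destruct (Z_le_gt_dec 0 k).
          rewrite (P_neg q (j - k)) by lia. ring. rewrite (P_neg q (j + k)) by lia. ring.
          rewrite (P_neg q (M - j)) by lia. ring. }
      unfold F0. replace (M - M)%Z with 0%Z by lia. replace ((Z.of_nat u - M) * 0)%Z with 0%Z by lia.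
      rewrite P0, E_0.
      assert (qpoch q (S N + u) * P q (Z.of_nat u + M) = 1) as h1.
      { rewrite <- (qpoch_P q (S N + u) g). f_equal. f_equal. unfold M. lia. }
      destruct (Z_le_gt_dec 0 k).
      * replace k with M by lia. replace (M - M)%Z with 0%Z by lia. rewrite P0.
        replace (Z.of_nat (S N)) with M by reflexivity.
        transitivity ((qpoch q (S N + u) * P q (Z.of_nat u + M)) * P q (Z.of_nat u - M) * P q (M + M)). ring. rewrite h1. ring.
      * replace k with (- M)%Z by lia. replace (M + - M)%Z with 0%Z by lia.
        replace (M - - M)%Z with (M + M)%Z by lia. replace (Z.of_nat u - - M)%Z with (Z.of_nat u + M)%Z by lia.
        rewrite P0. replace (Z.of_nat (S N)) with M by reflexivity.
        transitivity ((qpoch q (S N + u) * P q (Z.of_nat u + M)) * P q (Z.of_nat u - M) * P q (M + M)). replace (Z.of_nat u + - M)%Z with (Z.of_nat u - M)%Z by lia. ring. rewrite h1. ring.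
    + assert (D0 : (1 - E q (M - k)) * (1 - E q (M + k)) <> 0).
      { apply Cmult_nz; apply one_minus_E_nz; auto; lia. }
      set (c := (1 - E q (M + Z.of_nat u))) in *.
      set (st := qpoch q (N + u) * P q (Z.of_nat u - k) * P q (Z.of_nat u + k) * P q (Z.of_nat N - k) * P q (Z.of_nat N + k)) in *.
      set (Dk := (1 - E q (M - k)) * (1 - E q (M + k))) in *.
      assert (X : zs B (F0 q (Z.of_nat u) M k) = / Dk * (c * st)).
      { replace (c * st) with (Dk * zs B (F0 q (Z.of_nat u) M k)).
        field. exact D0. rewrite <- (Cplus_0_l (c * st)). rewrite <- tele. ring. }
      unfold st, c in X. rewrite eM in X.
      rewrite X. replace (M - 1 - k)%Z with ((M - k) - 1)%Z by ring.
      replace (M - 1 + k)%Z with ((M + k) - 1)%Z by ring. rewrite !(Prec q _ g).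
      replace (S N + u)%nat with (S (N + u)) by lia. rewrite qpoch_succ.
      replace (Z.of_nat (S (N + u))) with (M + Z.of_nat u)%Z by (unfold M; lia).
      replace (Z.of_nat (S N)) with M by reflexivity.
      unfold Dk in *. field. repeat split; apply one_minus_E_nz; auto; lia.
Qed.

(* ---------- K : q-Saalschutz kernel ---------- *)
Definition FK (q : C) (l m n k j : Z) : C :=
  E q (j * j) * qpoch q (Z.to_nat (l + m + n - j)) * P q (l - j) * P q (m - j) * P q (n - j)
  * P q (j - k) * P q (j + k).

Definition HK (q : C) (l m n1 k j : Z) : C :=
  - E q n1 * E q (j * j - j) * qpoch q (Z.to_nat (l + m + n1 - j)) * P q (l - j) * P q (m - j)
  * P q (n1 - j) * P q (j - 1 - k) * P q (j - 1 + k).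

Lemma K_step (q : C) (l m n1 k j : Z) : good q -> (0 <= l)%Z -> (0 <= m)%Z -> (1 <= n1)%Z ->
  (1 - E q (n1 - k)) * (1 - E q (n1 + k)) * FK q l m n1 k j
  - (1 - E q (l + n1)) * (1 - E q (m + n1)) * FK q l m (n1 - 1) k j
  = HK q l m n1 k (j + 1) - HK q l m n1 k j.
Proof.
  intros g hl hm hn. assert (hq : q <> 0) by apply g. unfold FK, HK.
  destruct (Z_le_gt_dec j (l + m + n1 - 1)) as [hj|hj].
  - rewrite (QZrec q (l + m + n1 - j)) by lia.
    replace (l + m + n1 - j - 1)%Z with (l + m + (n1 - 1) - j)%Z by ring.
    replace (l + m + n1 - (j + 1))%Z with (l + m + (n1 - 1) - j)%Z by ring.
    replace ((j + 1) * (j + 1) - (j + 1))%Z with (j * j + j)%Z by ring.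
    replace (j * j - j)%Z with (j * j - j)%Z by ring.
    replace (n1 - 1 - j)%Z with ((n1 - j) - 1)%Z by ring.
    replace (l - (j + 1))%Z with ((l - j) - 1)%Z by ring.
    replace (m - (j + 1))%Z with ((m - j) - 1)%Z by ring.
    replace (n1 - (j + 1))%Z with ((n1 - j) - 1)%Z by ring.
    replace (j + 1 - 1 - k)%Z with (j - k)%Z by ring.
    replace (j + 1 - 1 + k)%Z with (j + k)%Z by ring.
    replace (j - 1 - k)%Z with ((j - k) - 1)%Z by ring.
    replace (j - 1 + k)%Z with ((j + k) - 1)%Z by ring.
    rewrite !(Prec q _ g).
    Esimp hq. fld hq.
  - rewrite (P_neg q (l - j)) by lia. rewrite (P_neg q (l - (j + 1))) by lia. ring.
Qed.

Definition KR (q : C) (l m n : nat) (k : Z) : C :=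
  E q (k * k) * qpoch q (l + m) * qpoch q (l + n) * qpoch q (m + n)
  * P q (Z.of_nat l - k) * P q (Z.of_nat l + k) * P q (Z.of_nat m - k) * P q (Z.of_nat m + k)
  * P q (Z.of_nat n - k) * P q (Z.of_nat n + k).

Lemma Kthm (q : C) (l m n : nat) (k : Z) (B : nat) : good q -> (l + m + n <= B)%nat ->
  zs B (FK q (Z.of_nat l) (Z.of_nat m) (Z.of_nat n) k) = KR q l m n k.
Proof.
  intros g. assert (hq : q <> 0) by apply g. revert k. induction n; intros k hB.
  - unfold KR. destruct (Z.eq_dec k 0) as [e|e].
    + subst k. rewrite (zs_single B _ 0%Z).
      2:{ lia. }
      2:{ intros j hj. unfold FK. destruct (Z_le_gt_dec 0 j).
          rewrite (P_neg q (Z.of_nat 0 - j)) by lia. ring. rewrite (P_neg q (j - 0)) by lia. ring. }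
      unfold FK.
      replace (Z.to_nat (Z.of_nat l + Z.of_nat m + Z.of_nat 0 - 0)) with (l + m)%nat by lia.
      replace (Z.of_nat 0 - 0)%Z with 0%Z by lia. replace (Z.of_nat l - 0)%Z with (Z.of_nat l) by lia.
      replace (Z.of_nat l + 0)%Z with (Z.of_nat l) by lia. replace (Z.of_nat m - 0)%Z with (Z.of_nat m) by lia.
      replace (Z.of_nat m + 0)%Z with (Z.of_nat m) by lia. replace (Z.of_nat 0 + 0)%Z with 0%Z by lia.
      replace (0 - 0)%Z with 0%Z by lia. replace (0 + 0)%Z with 0%Z by lia.
      replace (0 * 0)%Z with 0%Z by lia. replace (l + 0)%nat with l by lia. replace (m + 0)%nat with m by lia.
      rewrite P0, E_0. pose proof (qpoch_P q l g) as h1. pose proof (qpoch_P q m g) as h2.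
      transitivity (qpoch q (l + m) * P q (Z.of_nat l) * P q (Z.of_nat m) * (qpoch q l * P q (Z.of_nat l)) * (qpoch q m * P q (Z.of_nat m))).
      rewrite h1, h2. ring. ring.
    + rewrite zs_zero.
      2:{ intros j hj. unfold FK. destruct (Z_le_gt_dec j 0).
          destruct (Z_le_gt_dec 0 k).
          rewrite (P_neg q (j - k)) by lia. ring. rewrite (P_neg q (j + k)) by lia. ring.
          rewrite (P_neg q (Z.of_nat 0 - j)) by lia. ring. }
      destruct (Z_le_gt_dec 0 k).
      rewrite (P_neg q (Z.of_nat 0 - k)) by lia. ring. rewrite (P_neg q (Z.of_nat 0 + k)) by lia. ring.
  - set (M := Z.of_nat (S n)).
    assert (eM : Z.of_nat n = (M - 1)%Z) by (unfold M; lia).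
    assert (tele : (1 - E q (M - k)) * (1 - E q (M + k)) * zs B (FK q (Z.of_nat l) (Z.of_nat m) M k)
                   - (1 - E q (Z.of_nat l + M)) * (1 - E q (Z.of_nat m + M))
                     * zs B (FK q (Z.of_nat l) (Z.of_nat m) (M - 1) k) = 0).
    { transitivity (zs B (fun j => HK q (Z.of_nat l) (Z.of_nat m) M k (j + 1) - HK q (Z.of_nat l) (Z.of_nat m) M k j)).
      { rewrite (zs_ext B (fun j => HK q (Z.of_nat l) (Z.of_nat m) M k (j + 1) - HK q (Z.of_nat l) (Z.of_nat m) M k j)
          (fun j => (1 - E q (M - k)) * (1 - E q (M + k)) * FK q (Z.of_nat l) (Z.of_nat m) M k j
             + (- ((1 - E q (Z.of_nat l + M)) * (1 - E q (Z.of_nat m + M)))) * FK q (Z.of_nat l) (Z.of_nat m) (M - 1) k j)).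
        2:{ intros j hj. rewrite <- (K_step q (Z.of_nat l) (Z.of_nat m) M k j g) by (unfold M; lia). ring. }
        rewrite zs_add, !zs_scal. ring. }
      rewrite zs_tele. unfold HK.
      rewrite (P_neg q (Z.of_nat l - (Z.of_nat B + 1))) by lia.
      destruct (Z_le_gt_dec 0 k).
      rewrite (P_neg q (- Z.of_nat B - 1 - k)) by lia. ring.
      rewrite (P_neg q (- Z.of_nat B - 1 + k)) by lia. ring. }
    rewrite <- eM, IHn in tele by lia.
    unfold KR in *.
    destruct (Z.eq_dec (Z.abs k) M) as [ek|ek].
    + rewrite (zs_single B _ M).
      2:{ unfold M; lia. }
      2:{ intros j hj. unfold FK. destruct (Z_le_gt_dec j M).
          destruct (Z_le_gt_dec 0 k).
          rewrite (P_neg q (j - k)) by lia. ring. rewrite (P_neg q (j + k)) by lia. ring.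
          rewrite (P_neg q (M - j)) by lia. ring. }
      unfold FK. replace (M - M)%Z with 0%Z by lia.
      replace (Z.to_nat (Z.of_nat l + Z.of_nat m + M - M)) with (l + m)%nat by lia.
      rewrite P0.
      assert (qpoch q (l + S n) * P q (Z.of_nat l + M) = 1) as h1.
      { rewrite <- (qpoch_P q (l + S n) g). f_equal. f_equal. unfold M. lia. }
      assert (qpoch q (m + S n) * P q (Z.of_nat m + M) = 1) as h2.
      { rewrite <- (qpoch_P q (m + S n) g). f_equal. f_equal. unfold M. lia. }
      replace (Z.of_nat (S n)) with M by reflexivity.
      assert (k * k = M * M)%Z as ekk by lia. rewrite ekk.
      destruct (Z_le_gt_dec 0 k).
      * replace k with M by lia. replace (M - M)%Z with 0%Z by lia. rewrite P0.
        transitivity (E q (M * M) * qpoch q (l + m) * P q (Z.of_nat l - M) * P q (Z.of_nat m - M) * P q (M + M)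
          * (qpoch q (l + S n) * P q (Z.of_nat l + M)) * (qpoch q (m + S n) * P q (Z.of_nat m + M))).
        rewrite h1, h2. ring. ring.
      * replace k with (- M)%Z by lia. replace (M + - M)%Z with 0%Z by lia.
        replace (M - - M)%Z with (M + M)%Z by lia. replace (Z.of_nat l - - M)%Z with (Z.of_nat l + M)%Z by lia.
        replace (Z.of_nat m - - M)%Z with (Z.of_nat m + M)%Z by lia.
        replace (Z.of_nat l + - M)%Z with (Z.of_nat l - M)%Z by lia.
        replace (Z.of_nat m + - M)%Z with (Z.of_nat m - M)%Z by lia.
        rewrite P0.
        transitivity (E q (M * M) * qpoch q (l + m) * P q (Z.of_nat l - M) * P q (Z.of_nat m - M) * P q (M + M)
          * (qpoch q (l + S n) * P q (Z.of_nat l + M)) * (qpoch q (m + S n) * P q (Z.of_nat m + M))).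
        rewrite h1, h2. ring. ring.
    + assert (D0 : (1 - E q (M - k)) * (1 - E q (M + k)) <> 0).
      { apply Cmult_nz; apply one_minus_E_nz; auto; lia. }
      set (c := (1 - E q (Z.of_nat l + M)) * (1 - E q (Z.of_nat m + M))) in *.
      set (st := E q (k * k) * qpoch q (l + m) * qpoch q (l + n) * qpoch q (m + n)
          * P q (Z.of_nat l - k) * P q (Z.of_nat l + k) * P q (Z.of_nat m - k) * P q (Z.of_nat m + k)
          * P q (Z.of_nat n - k) * P q (Z.of_nat n + k)) in *.
      set (Dk := (1 - E q (M - k)) * (1 - E q (M + k))) in *.
      assert (X : zs B (FK q (Z.of_nat l) (Z.of_nat m) M k) = / Dk * (c * st)).
      { replace (c * st) with (Dk * zs B (FK q (Z.of_nat l) (Z.of_nat m) M k)).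
        field. exact D0. rewrite <- (Cplus_0_l (c * st)). rewrite <- tele. ring. }
      unfold st, c in X. rewrite eM in X.
      rewrite X. replace (M - 1 - k)%Z with ((M - k) - 1)%Z by ring.
      replace (M - 1 + k)%Z with ((M + k) - 1)%Z by ring. rewrite !(Prec q _ g).
      replace (l + S n)%nat with (S (l + n)) by lia. replace (m + S n)%nat with (S (m + n)) by lia.
      rewrite !qpoch_succ.
      replace (Z.of_nat (S (l + n))) with (Z.of_nat l + M)%Z by (unfold M; lia).
      replace (Z.of_nat (S (m + n))) with (Z.of_nat m + M)%Z by (unfold M; lia).
      replace (Z.of_nat (S n)) with M by reflexivity.
      unfold Dk in *. field. repeat split; apply one_minus_E_nz; auto; lia.
Qed.

Lemma zs_swap_scal (B : nat) (a : Z -> C) (f : Z -> Z -> C) :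
  zs B (fun k => a k * zs B (fun j => f k j)) = zs B (fun j => zs B (fun k => a k * f k j)).
Proof.
  rewrite <- zs_swap. apply zs_ext. intros k hk. rewrite <- zs_scal. reflexivity.
Qed.

Lemma Ut_negj (q : C) (j k : Z) : (j < 0)%Z -> Ut q j k = 0.
Proof.
  intros h. unfold Ut. destruct (Z_le_gt_dec 0 k).
  rewrite (P_neg q (j - k)) by lia. ring. rewrite (P_neg q (j + k)) by lia. ring.
Qed.

Lemma Asym (q : C) (u N B : nat) : good q -> (N + u <= B)%nat ->
  zs B (fun k => alpha q k * qpoch q u * P q (Z.of_nat u - k) * P q (Z.of_nat u + k)
                 * P q (Z.of_nat N - k) * P q (Z.of_nat N + k))
  = E q (Z.of_nat u * Z.of_nat N) * P q (Z.of_nat N) * P q (Z.of_nat N + Z.of_nat u).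
Proof.
  intros g hB. assert (hq : q <> 0) by apply g.
  pose proof (qpoch_nz q (N + u) g) as hz.
  rewrite (zs_ext B _ (fun k => (alpha q k * (qpoch q u / qpoch q (N + u)))
     * zs B (fun j => F0 q (Z.of_nat u) (Z.of_nat N) k j))).
  2:{ intros k hk. rewrite <- K0 by auto. field. exact hz. }
  rewrite zs_swap_scal.
  rewrite (zs_ext B _ (fun j => (qpoch q u / qpoch q (N + u)) *
     (E q ((Z.of_nat u - j) * (Z.of_nat N - j)) * P q (Z.of_nat u - j) * P q (Z.of_nat N - j)
      * zs B (Ut q j)))).
  2:{ intros j hj. rewrite <- !zs_scal. apply zs_ext. intros k hk. unfold F0, Ut. ring. }
  rewrite zs_scal.
  rewrite (zs_single_in B _ 0%Z).
  2:{ lia. }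
  2:{ intros j hj hj0. destruct (Z_le_gt_dec 0 j).
      - replace j with (Z.of_nat (Z.to_nat j)) by lia.
        rewrite U_val by (auto; lia). destruct (Z.to_nat j) eqn:ej. lia. ring.
      - rewrite zs_zero. ring. intros k hk. apply Ut_negj. lia. }
  replace 0%Z with (Z.of_nat 0) at 5 by reflexivity.
  rewrite U_val by (auto; lia).
  replace (Z.of_nat u - 0)%Z with (Z.of_nat u) by lia. replace (Z.of_nat N - 0)%Z with (Z.of_nat N) by lia.
  replace (Z.of_nat N + Z.of_nat u)%Z with (Z.of_nat (N + u)) by lia.
  rewrite !P_nat. replace (Z.of_nat u * Z.of_nat N)%Z with (Z.of_nat u * Z.of_nat N)%Z by ring.
  field. repeat split; apply qpoch_nz; auto.
Qed.

Definition Xf (q : C) (l m n j : Z) : C :=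
  E q (j * j) * qpoch q (Z.to_nat (l + m + n - j)) * P q (l - j) * P q (m - j) * P q (n - j).

Lemma Sym (q : C) (l m n u B : nat) : good q -> (l + m + n + u <= B)%nat ->
  zs B (fun j => Xf q (Z.of_nat l) (Z.of_nat m) (Z.of_nat n) j * E q (Z.of_nat u * j)
                 * P q j * P q (j + Z.of_nat u))
  = zs B (fun k => alpha q k * qpoch q u * P q (Z.of_nat u - k) * P q (Z.of_nat u + k) * KR q l m n k).
Proof.
  intros g hB. assert (hq : q <> 0) by apply g.
  rewrite (zs_ext B (fun k => alpha q k * qpoch q u * P q (Z.of_nat u - k) * P q (Z.of_nat u + k) * KR q l m n k)
     (fun k => (alpha q k * qpoch q u * P q (Z.of_nat u - k) * P q (Z.of_nat u + k))
        * zs B (fun j => FK q (Z.of_nat l) (Z.of_nat m) (Z.of_nat n) k j))).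
  2:{ intros k hk. rewrite Kthm by (auto; lia). ring. }
  rewrite zs_swap_scal. apply zs_ext. intros j hj.
  destruct (Z_le_gt_dec 0 j) as [h0|h0].
  - destruct (Z_le_gt_dec j (Z.of_nat l)) as [h1|h1].
    + pose proof (Asym q u (Z.to_nat j) B g ltac:(lia)) as A.
      replace (Z.of_nat (Z.to_nat j)) with j in A by lia.
      rewrite (zs_ext B _ (fun k => Xf q (Z.of_nat l) (Z.of_nat m) (Z.of_nat n) j *
         (alpha q k * qpoch q u * P q (Z.of_nat u - k) * P q (Z.of_nat u + k) * P q (j - k) * P q (j + k)))).
      2:{ intros k hk. unfold FK, Xf. ring. }
      rewrite zs_scal, A. replace (Z.of_nat u * j)%Z with (Z.of_nat u * j)%Z by ring.
      replace (j + Z.of_nat u)%Z with (j + Z.of_nat u)%Z by ring. ring.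
    + unfold Xf. rewrite (P_neg q (Z.of_nat l - j)) by lia. rewrite zs_zero. ring.
      intros k hk. unfold FK. rewrite (P_neg q (Z.of_nat l - j)) by lia. ring.
  - rewrite (P_neg q j) by lia. rewrite zs_zero. ring.
    intros k hk. unfold FK. destruct (Z_le_gt_dec 0 k).
    rewrite (P_neg q (j - k)) by lia. ring. rewrite (P_neg q (j + k)) by lia. ring.
Qed.

Lemma tri3m (k : Z) : ((3 * k * k - k) / 2 = k * (k - 1) / 2 + k * k)%Z.
Proof.
  replace (3 * k * k - k)%Z with (k * (k - 1) + (k * k) * 2)%Z by ring.
  rewrite Z.div_add by lia. reflexivity.
Qed.

Lemma tri3p (k : Z) : ((3 * k * k + k) / 2 = k * (k - 1) / 2 + k * k + k)%Z.
Proof.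
  replace (3 * k * k + k)%Z with (k * (k - 1) + (k * k + k) * 2)%Z by ring.
  rewrite Z.div_add by lia. ring.
Qed.

Lemma qpoch_pred (q : C) (u : nat) : (1 <= u)%nat ->
  qpoch q u = qpoch q (u - 1) * (1 - E q (Z.of_nat u)).
Proof.
  intros h. destruct u. lia. rewrite qpoch_succ. replace (S u - 1)%nat with u by lia. reflexivity.
Qed.

Definition T1 (q : C) (l m n u : nat) (k : Z) : C :=
  zsign k * E q ((3 * k * k - k) / 2)
  * qpoch q (l + m) * qpoch q (l + n) * qpoch q (m + n) * qpoch q (u - 1)
  * P q (Z.of_nat l - k) * P q (Z.of_nat m - k) * P q (Z.of_nat n - k) * P q (Z.of_nat u - k)
  * P q (Z.of_nat l + k) * P q (Z.of_nat m + k) * P q (Z.of_nat n + k) * P q (Z.of_nat u + k - 1).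

Definition S1 (q : C) (l m n u : nat) (k : Z) : C :=
  alpha q k * qpoch q u * P q (Z.of_nat u - k) * P q (Z.of_nat u + k) * KR q l m n k.

Lemma T1_S1_antisym (q : C) (l m n u : nat) (k : Z) : good q -> (1 <= u)%nat ->
  T1 q l m n u (- k) - S1 q l m n u (- k) = - (T1 q l m n u k - S1 q l m n u k).
Proof.
  intros g hu. assert (hq : q <> 0) by apply g.
  unfold T1, S1, KR, alpha. rewrite !zsign_opp.
  replace (3 * - k * - k - - k)%Z with (3 * k * k + k)%Z by ring.
  rewrite tri3m, tri3p, tri_opp.
  replace (- k * - k)%Z with (k * k)%Z by ring.
  replace (Z.of_nat l - - k)%Z with (Z.of_nat l + k)%Z by ring.
  replace (Z.of_nat m - - k)%Z with (Z.of_nat m + k)%Z by ring.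
  replace (Z.of_nat n - - k)%Z with (Z.of_nat n + k)%Z by ring.
  replace (Z.of_nat u - - k)%Z with (Z.of_nat u + k)%Z by ring.
  replace (Z.of_nat l + - k)%Z with (Z.of_nat l - k)%Z by ring.
  replace (Z.of_nat m + - k)%Z with (Z.of_nat m - k)%Z by ring.
  replace (Z.of_nat n + - k)%Z with (Z.of_nat n - k)%Z by ring.
  replace (Z.of_nat u + - k - 1)%Z with ((Z.of_nat u - k) - 1)%Z by ring.
  replace (Z.of_nat u + - k)%Z with (Z.of_nat u - k)%Z by ring.
  replace (Z.of_nat u + k - 1)%Z with ((Z.of_nat u + k) - 1)%Z by ring.
  rewrite !(Prec q _ g). rewrite (qpoch_pred q u hu).
  Esimp hq. fld hq.
Qed.

Lemma Id1 (q : C) (l m n u B : nat) : good q -> (1 <= u)%nat -> (l + m + n + u <= B)%nat ->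
  zs B (fun j => Xf q (Z.of_nat l) (Z.of_nat m) (Z.of_nat n) j * E q (Z.of_nat u * j)
                 * P q j * P q (j + Z.of_nat u))
  = zs B (T1 q l m n u).
Proof.
  intros g hu hB. rewrite Sym by auto.
  assert (zs B (fun k => T1 q l m n u k - S1 q l m n u k) = 0) as h0.
  { apply zs_antisym. intros k. apply T1_S1_antisym; auto. }
  rewrite (zs_ext B (fun k => T1 q l m n u k - S1 q l m n u k)
     (fun k => T1 q l m n u k + (-1) * S1 q l m n u k)) in h0 by (intros; ring).
  rewrite zs_add, zs_scal in h0. unfold S1 in h0.
  replace (zs B (T1 q l m n u)) with (zs B (T1 q l m n u) + -1 * zs B
       (fun k => alpha q k * qpoch q u * P q (Z.of_nat u - k) * P q (Z.of_nat u + k) * KR q l m n k)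
       + zs B (fun k => alpha q k * qpoch q u * P q (Z.of_nat u - k) * P q (Z.of_nat u + k) * KR q l m n k)) by ring.
  rewrite h0. ring.
Qed.

Definition T2 (q : C) (l m n u : nat) (k : Z) : C :=
  zsign k * E q ((3 * k * k + k) / 2)
  * qpoch q (l + m) * qpoch q (m + n) * qpoch q (l + n) * qpoch q (u - 1)
  * P q (Z.of_nat l - k) * P q (Z.of_nat m - k) * P q (Z.of_nat n - k) * P q (Z.of_nat u - k)
  * P q (Z.of_nat l + k) * P q (Z.of_nat m + k) * P q (Z.of_nat n + k) * P q (Z.of_nat u + k - 1).

Lemma T2_sym (q : C) (l m n u : nat) (k : Z) : good q -> (1 <= u)%nat ->
  T2 q l m n u k + T2 q l m n u (- k) =
  (S1 q l m n (u - 1) k + E q (Z.of_nat u) * S1 q l m n u k)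
  + (S1 q l m n (u - 1) (- k) + E q (Z.of_nat u) * S1 q l m n u (- k)).
Proof.
  intros g hu. assert (hq : q <> 0) by apply g.
  unfold T2, S1, KR, alpha. rewrite !zsign_opp.
  replace (Z.of_nat (u - 1)) with (Z.of_nat u - 1)%Z by lia.
  replace (3 * - k * - k + - k)%Z with (3 * k * k - k)%Z by ring.
  rewrite tri3m, tri3p, tri_opp.
  replace (- k * - k)%Z with (k * k)%Z by ring.
  replace (Z.of_nat l - - k)%Z with (Z.of_nat l + k)%Z by ring.
  replace (Z.of_nat m - - k)%Z with (Z.of_nat m + k)%Z by ring.
  replace (Z.of_nat n - - k)%Z with (Z.of_nat n + k)%Z by ring.
  replace (Z.of_nat u - - k)%Z with (Z.of_nat u + k)%Z by ring.
  replace (Z.of_nat u - 1 - - k)%Z with ((Z.of_nat u + k) - 1)%Z by ring.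
  replace (Z.of_nat l + - k)%Z with (Z.of_nat l - k)%Z by ring.
  replace (Z.of_nat m + - k)%Z with (Z.of_nat m - k)%Z by ring.
  replace (Z.of_nat n + - k)%Z with (Z.of_nat n - k)%Z by ring.
  replace (Z.of_nat u + - k - 1)%Z with ((Z.of_nat u - k) - 1)%Z by ring.
  replace (Z.of_nat u - 1 + - k)%Z with ((Z.of_nat u - k) - 1)%Z by ring.
  replace (Z.of_nat u + - k)%Z with (Z.of_nat u - k)%Z by ring.
  replace (Z.of_nat u + k - 1)%Z with ((Z.of_nat u + k) - 1)%Z by ring.
  replace (Z.of_nat u - 1 - k)%Z with ((Z.of_nat u - k) - 1)%Z by ring.
  replace (Z.of_nat u - 1 + k)%Z with ((Z.of_nat u + k) - 1)%Z by ring.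
  rewrite !(Prec q _ g). rewrite (qpoch_pred q u hu).
  Esimp hq. fld hq.
Qed.

Lemma Id2 (q : C) (l m n u B : nat) : good q -> (1 <= u)%nat -> (l + m + n + u <= B)%nat ->
  zs B (fun j => Xf q (Z.of_nat l) (Z.of_nat m) (Z.of_nat n) j * E q (Z.of_nat (u - 1) * j)
                 * P q j * P q (j + Z.of_nat u))
  = zs B (T2 q l m n u).
Proof.
  intros g hu hB. assert (hq : q <> 0) by apply g.
  rewrite (zs_ext B _ (fun j =>
      Xf q (Z.of_nat l) (Z.of_nat m) (Z.of_nat n) j * E q (Z.of_nat (u - 1) * j) * P q j * P q (j + Z.of_nat (u - 1))
      + E q (Z.of_nat u) * (Xf q (Z.of_nat l) (Z.of_nat m) (Z.of_nat n) j * E q (Z.of_nat u * j) * P q j * P q (j + Z.of_nat u)))).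
  2:{ intros j hj. replace (j + Z.of_nat (u - 1))%Z with ((j + Z.of_nat u) - 1)%Z by lia.
      rewrite (Prec q _ g). replace (Z.of_nat (u - 1)) with (Z.of_nat u - 1)%Z by lia.
      replace (Z.of_nat u * j)%Z with ((Z.of_nat u - 1) * j + j)%Z by ring.
      Esimp hq. fld hq. }
  rewrite zs_add, zs_scal, !Sym by (auto; lia).
  rewrite <- zs_scal, <- zs_add. symmetry. apply zs_sym. intros k.
  rewrite T2_sym by auto. unfold S1. ring.
Qed.

Lemma sum_n_sumn (a : nat -> C) (N : nat) : sum_n a N = sumn a (S N).
Proof.
  induction N.
  - rewrite sum_O. simpl. ring.
  - rewrite sum_Sn, IHN. change (plus (sumn a (S N)) (a (S N))) with (sumn a (S N) + a (S N)).
    reflexivity.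
Qed.

Lemma sumn_stable (a : nat -> C) (K N : nat) : (K <= N)%nat ->
  (forall n, (K <= n)%nat -> a n = 0) -> sumn a N = sumn a K.
Proof.
  intros h hz. induction h; auto. simpl. rewrite IHh, hz by lia. ring.
Qed.

Lemma is_series_fin (a : nat -> C) (K : nat) :
  (forall n, (K <= n)%nat -> a n = 0) -> is_series a (sumn a K).
Proof.
  intros hz. unfold is_series.
  apply (filterlim_ext_loc (fun _ => sumn a K)).
  - exists K. intros N hN. rewrite sum_n_sumn. symmetry. apply sumn_stable; auto.
  - apply filterlim_const.
Qed.

Lemma zs_split (B : nat) (f : Z -> C) :
  zs B f = sumn (fun i => f (Z.of_nat i)) (S B) + sumn (fun i => f (- Z.of_nat (S i))%Z) B.
Proof.
  induction B.
  - unfold zs. simpl. ring.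
  - rewrite zs_S, IHB. change (sumn (fun i => f (Z.of_nat i)) (S (S B))) with
      (sumn (fun i => f (Z.of_nat i)) (S B) + f (Z.of_nat (S B))).
    change (sumn (fun i => f (- Z.of_nat (S i))%Z) (S B)) with
      (sumn (fun i => f (- Z.of_nat (S i))%Z) B + f (- Z.of_nat (S B))%Z).
    ring.
Qed.

Lemma zs_nonneg (B : nat) (f : Z -> C) : (forall k, (k < 0)%Z -> f k = 0) ->
  zs B f = sumn (fun i => f (Z.of_nat i)) (S B).
Proof.
  intros h. rewrite zs_split. rewrite (sumn_zero (fun i => f (- Z.of_nat (S i))%Z)).
  ring. intros i hi. apply h. lia.
Qed.

Lemma conv_lhs (q : C) (l m n u k : nat) (a : nat) : q <> 0 ->
  Cpow q (k * k + a * k) * qpoch q (l + m + n - k)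
       * / qpoch q k
       * qpinv q (Z.of_nat l - Z.of_nat k) * qpinv q (Z.of_nat m - Z.of_nat k)
       * qpinv q (Z.of_nat n - Z.of_nat k) * / qpoch q (u + k)
  = Xf q (Z.of_nat l) (Z.of_nat m) (Z.of_nat n) (Z.of_nat k) * E q (Z.of_nat a * Z.of_nat k)
    * P q (Z.of_nat k) * P q (Z.of_nat k + Z.of_nat u).
Proof.
  intros hq. unfold Xf. rewrite Cpow_add_r. rewrite <- !E_nat. rewrite !Nat2Z.inj_mul.
  replace (Z.of_nat k + Z.of_nat u)%Z with (Z.of_nat (u + k)) by lia.
  rewrite !P_nat.
  replace (Z.to_nat (Z.of_nat l + Z.of_nat m + Z.of_nat n - Z.of_nat k)) with (l + m + n - k)%nat by lia.
  unfold P. ring.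
Qed.

Lemma tri3m_nonneg (k : Z) : (0 <= (3 * k * k - k) / 2)%Z.
Proof. apply Z.div_pos; nia. Qed.

Lemma tri3p_nonneg (k : Z) : (0 <= (3 * k * k + k) / 2)%Z.
Proof. apply Z.div_pos; nia. Qed.

Theorem corollary5p6 (q : Complex.C) (l m n u : nat)
  (hq0 : (0 < Cmod q)%R) (hq1 : (Cmod q < 1)%R) (hu : (1 <= u)%nat) :
  (exists s : Complex.C,
     is_series (fun k : nat =>
       Cpow q (k * k + u * k) * qpoch q (l + m + n - k)
       * / qpoch q k
       * qpinv q (Z.of_nat l - Z.of_nat k) * qpinv q (Z.of_nat m - Z.of_nat k)
       * qpinv q (Z.of_nat n - Z.of_nat k) * / qpoch q (u + k)) s /\
     is_zseries (fun k : Z =>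
       zsign k * Cpow q (Z.to_nat ((3 * k * k - k) / 2))
       * qpoch q (l + m) * qpoch q (l + n) * qpoch q (m + n) * qpoch q (u - 1)
       * qpinv q (Z.of_nat l - k) * qpinv q (Z.of_nat m - k)
       * qpinv q (Z.of_nat n - k) * qpinv q (Z.of_nat u - k)
       * qpinv q (Z.of_nat l + k) * qpinv q (Z.of_nat m + k)
       * qpinv q (Z.of_nat n + k) * qpinv q (Z.of_nat u + k - 1)) s)
  /\
  (exists s : Complex.C,
     is_series (fun k : nat =>
       Cpow q (k * k + (u - 1) * k) * qpoch q (l + m + n - k)
       * / qpoch q k
       * qpinv q (Z.of_nat l - Z.of_nat k) * qpinv q (Z.of_nat m - Z.of_nat k)
       * qpinv q (Z.of_nat n - Z.of_nat k) * / qpoch q (u + k)) s /\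
     is_zseries (fun k : Z =>
       zsign k * Cpow q (Z.to_nat ((3 * k * k + k) / 2))
       * qpoch q (l + m) * qpoch q (m + n) * qpoch q (l + n) * qpoch q (u - 1)
       * qpinv q (Z.of_nat l - k) * qpinv q (Z.of_nat m - k)
       * qpinv q (Z.of_nat n - k) * qpinv q (Z.of_nat u - k)
       * qpinv q (Z.of_nat l + k) * qpinv q (Z.of_nat m + k)
       * qpinv q (Z.of_nat n + k) * qpinv q (Z.of_nat u + k - 1)) s).
Proof.
  assert (g := good_of q hq0 hq1). assert (hq : q <> 0) by apply g.
  set (B := (l + m + n + u)%nat).
  assert (hB : (l + m + n + u <= B)%nat) by (unfold B; lia).
  split.
  - exists (zs B (T1 q l m n u)). split.
    + rewrite <- Id1 by auto. rewrite zs_nonneg.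
      2:{ intros j hj. rewrite (P_neg q j) by lia. ring. }
      eapply is_series_ext.
      2:{ apply is_series_fin. intros k hk. unfold Xf. rewrite (P_neg q (Z.of_nat l - Z.of_nat k)) by (unfold B in hk; lia). ring. }
      intros k. simpl. rewrite conv_lhs by auto. reflexivity.
    + exists (sumn (fun i => T1 q l m n u (Z.of_nat i)) (S B)),
             (sumn (fun i => T1 q l m n u (- Z.of_nat (S i))%Z) B).
      split; [|split].
      * eapply is_series_ext.
        2:{ apply is_series_fin. intros k hk. unfold T1. rewrite (P_neg q (Z.of_nat l - Z.of_nat k)) by (unfold B in hk; lia). ring. }
        intros k. simpl. unfold T1, P. rewrite E_nonneg by apply tri3m_nonneg. reflexivity.
      * eapply is_series_ext.
        2:{ apply is_series_fin. intros k hk. unfold T1. rewrite (P_neg q (Z.of_nat l + - Z.of_nat (S k))) by (unfold B in hk; lia). ring. }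
        intros k. simpl. unfold T1, P. rewrite E_nonneg by apply tri3m_nonneg. reflexivity.
      * apply zs_split.
  - exists (zs B (T2 q l m n u)). split.
    + rewrite <- Id2 by auto. rewrite zs_nonneg.
      2:{ intros j hj. rewrite (P_neg q j) by lia. ring. }
      eapply is_series_ext.
      2:{ apply is_series_fin. intros k hk. unfold Xf. rewrite (P_neg q (Z.of_nat l - Z.of_nat k)) by (unfold B in hk; lia). ring. }
      intros k. simpl. rewrite conv_lhs by auto. reflexivity.
    + exists (sumn (fun i => T2 q l m n u (Z.of_nat i)) (S B)),
             (sumn (fun i => T2 q l m n u (- Z.of_nat (S i))%Z) B).
      split; [|split].
      * eapply is_series_ext.
        2:{ apply is_series_fin. intros k hk. unfold T2. rewrite (P_neg q (Z.of_nat l - Z.of_nat k)) by (unfold B in hk; lia). ring. }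
        intros k. simpl. unfold T2, P. rewrite E_nonneg by apply tri3p_nonneg. reflexivity.
      * eapply is_series_ext.
        2:{ apply is_series_fin. intros k hk. unfold T2. rewrite (P_neg q (Z.of_nat l + - Z.of_nat (S k))) by (unfold B in hk; lia). ring. }
        intros k. simpl. unfold T2, P. rewrite E_nonneg by apply tri3p_nonneg. reflexivity.
      * apply zs_split.
Qed.
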